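(* Let $\Gamma$ be a $W$-generic metric graph, with $W:\Gamma\to\mathbb{R}$ of class $C^1$, and let $f_k$, $\lambda_k$ be the eigenfunctions and eigenvalues of $H_W=-\frac{\partial^2}{\partial x^2}+W$ with Dirichlet boundary and Neumann–Kirchhoff vertex conditions. Let $k_1<\dots<k_M$ and nonzero reals $a_1,\dots,a_M$ be given, and define $g(x,y)=\sum_{i=1}^{M}a_ie^{-\lambda_{k_i}y}f_{k_i}(x)$ for $x\in\Gamma$, $y\in\mathbb{R}$, and $F_y(x):=g(x,y)$. Then for every $y\in\mathbb{R}$, $F_y$ is not identically zero on any open subset of $\Gamma$.
   Context: A metric graph is connected with finitely many edges of finite length, each identified with an interval. $H_W$ acts edgewise on $\bigoplus_e H^2(e)$ with Dirichlet conditions at degree-one vertices and, at inner vertices (degree $\ge2$), continuity and vanishing sum of the outgoing derivatives. Eigenvalues $\lambda_1\le\lambda_2\le\dots$ are counted with multiplicity, with $L^2$-orthogonal eigenfunctions $f_k$. $\Gamma$ is $W$-generic if no eigenfunction of $H_W$ vanishes at an inner vertex (so all eigenvalues are simple). *)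

(* Defs.v *)
From Stdlib Require Import Reals Lra Relations.
From Coquelicot Require Import Coquelicot.
Open Scope R_scope.

(* Vertices are 0..nV-1, edges are 0..nE-1.  Edge e is identified with the
   interval [0, len e]; coordinate 0 is the endpoint [src e], coordinate
   [len e] is the endpoint [tgt e].  Loops and multiple edges are allowed. *)
Record metric_graph := MetricGraph {
  nV : nat;
  nE : nat;
  src : nat -> nat;
  tgt : nat -> nat;
  len : nat -> R
}.

Fixpoint sumR (n : nat) (f : nat -> R) : R :=
  match n with O => 0 | S m => sumR m f + f m end.

Fixpoint sumN (n : nat) (f : nat -> nat) : nat :=
  match n with O => O | S m => (sumN m f + f m)%nat end.

Definition end_vertex (G : metric_graph) (e : nat) (b : bool) : nat :=
  if b then tgt G e else src G e.
Definition end_pos (G : metric_graph) (e : nat) (b : bool) : R :=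
  if b then len G e else 0.

(* degree of a vertex (a loop counts twice) *)
Definition deg (G : metric_graph) (v : nat) : nat :=
  sumN (nE G) (fun e =>
    ((if Nat.eqb (src G e) v then 1 else 0) + (if Nat.eqb (tgt G e) v then 1 else 0))%nat).

Definition adjacent (G : metric_graph) (v w : nat) : Prop :=
  exists e, (e < nE G)%nat /\
    ((src G e = v /\ tgt G e = w) \/ (src G e = w /\ tgt G e = v)).

Definition metric_graph_wf (G : metric_graph) : Prop :=
  (0 < nE G)%nat /\
  (forall e, (e < nE G)%nat ->
     0 < len G e /\ (src G e < nV G)%nat /\ (tgt G e < nV G)%nat) /\
  (forall v w, (v < nV G)%nat -> (w < nV G)%nat ->
     clos_refl_trans nat (adjacent G) v w).

(* points of Gamma: pairs (e, t) with e an edge and t in [0, len e] *)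
Definition is_point (G : metric_graph) (e : nat) (t : R) : Prop :=
  (e < nE G)%nat /\ 0 <= t <= len G e.

Definition same_vertex (G : metric_graph) (e1 : nat) (b1 : bool) (e2 : nat) (b2 : bool) : Prop :=
  (e1 < nE G)%nat /\ (e2 < nE G)%nat /\ end_vertex G e1 b1 = end_vertex G e2 b2.

(* A subset of Gamma (given edgewise) is open in the metric-graph topology:
   it is well defined at vertices (the copies of a vertex on the incident edges
   are identified), and every point has an epsilon-neighbourhood in Gamma
   (along its edge, and, for a vertex, along all incident edges) inside U. *)
Definition graph_open (G : metric_graph) (U : nat -> R -> Prop) : Prop :=
  (forall e1 b1 e2 b2, same_vertex G e1 b1 e2 b2 ->
     (U e1 (end_pos G e1 b1) <-> U e2 (end_pos G e2 b2))) /\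
  (forall e t, is_point G e t -> U e t ->
     exists eps, 0 < eps /\
       (forall u, 0 <= u <= len G e -> Rabs (u - t) < eps -> U e u) /\
       (forall b e' b', t = end_pos G e b -> same_vertex G e b e' b' ->
          forall u, 0 <= u <= len G e' -> Rabs (u - end_pos G e' b') < eps -> U e' u)).

Definition deriv_within (L : R) (f : R -> R) (t d : R) : Prop :=
  forall eps, 0 < eps -> exists delta, 0 < delta /\
    forall u, 0 <= u <= L -> Rabs (u - t) < delta ->
      Rabs (f u - f t - d * (u - t)) <= eps * Rabs (u - t).

Definition cont_within (L : R) (f : R -> R) (t : R) : Prop :=
  forall eps, 0 < eps -> exists delta, 0 < delta /\
    forall u, 0 <= u <= L -> Rabs (u - t) < delta -> Rabs (f u - f t) < eps.

(* Functions on Gamma are given edgewise: f e t for t in [0, len e]. *)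

Definition potential_C1 (G : metric_graph) (W : nat -> R -> R) : Prop :=
  (forall e, (e < nE G)%nat -> exists dW : R -> R,
     forall t, 0 <= t <= len G e ->
       deriv_within (len G e) (W e) t (dW t) /\ cont_within (len G e) dW t) /\
  (forall e1 b1 e2 b2, same_vertex G e1 b1 e2 b2 ->
     W e1 (end_pos G e1 b1) = W e2 (end_pos G e2 b2)).

(* f is a nonzero eigenfunction of H_W = -d^2/dx^2 + W with eigenvalue lam,
   Dirichlet conditions at degree-one vertices, continuity + Kirchhoff
   (vanishing sum of outgoing derivatives) at inner vertices. *)
Definition is_eigenpair (G : metric_graph) (W : nat -> R -> R) (lam : R)
    (f : nat -> R -> R) : Prop :=
  (exists D1 D2 : nat -> R -> R,
    (forall e, (e < nE G)%nat -> forall t, 0 <= t <= len G e ->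
       deriv_within (len G e) (f e) t (D1 e t) /\
       deriv_within (len G e) (D1 e) t (D2 e t) /\
       - D2 e t + W e t * f e t = lam * f e t) /\
    (forall v, (v < nV G)%nat ->
       ((deg G v = 1%nat ->
           forall e b, (e < nE G)%nat -> end_vertex G e b = v -> f e (end_pos G e b) = 0) /\
        ((2 <= deg G v)%nat ->
           (forall e1 b1 e2 b2, same_vertex G e1 b1 e2 b2 -> end_vertex G e1 b1 = v ->
              f e1 (end_pos G e1 b1) = f e2 (end_pos G e2 b2)) /\
           sumR (nE G) (fun e =>
              (if Nat.eqb (src G e) v then D1 e 0 else 0) +
              (if Nat.eqb (tgt G e) v then - D1 e (len G e) else 0)) = 0)))) /\
  (exists e t, is_point G e t /\ f e t <> 0).

Definition l2_inner (G : metric_graph) (f g : nat -> R -> R) : R :=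
  sumR (nE G) (fun e => RInt (fun t => f e t * g e t) 0 (len G e)).

(* (lam k, f k)_k is the full list of eigenvalues counted with multiplicity,
   in nondecreasing order, with L^2-orthogonal eigenfunctions:
   every eigenfunction is non-orthogonal to some f k (so the f k with
   lam k = mu span the mu-eigenspace). *)
Definition eigen_enumeration (G : metric_graph) (W : nat -> R -> R)
    (lam : nat -> R) (f : nat -> nat -> R -> R) : Prop :=
  (forall k, is_eigenpair G W (lam k) (f k)) /\
  (forall j k, (j <= k)%nat -> lam j <= lam k) /\
  (forall j k, j <> k -> l2_inner G (f j) (f k) = 0) /\
  (forall mu g, is_eigenpair G W mu g -> exists k, l2_inner G (f k) g <> 0).

Definition W_generic (G : metric_graph) (W : nat -> R -> R) : Prop :=
  forall mu g, is_eigenpair G W mu g ->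
    forall e b, (e < nE G)%nat -> (2 <= deg G (end_vertex G e b))%nat ->
      g e (end_pos G e b) <> 0.

(* Main.v *)
Require Import Defs.
From Stdlib Require Import Reals Lra Lia Relations Classical ClassicalEpsilon Arith.
From Coquelicot Require Import Coquelicot.
Open Scope R_scope.

Lemma sumR_ext n f g : (forall i, (i < n)%nat -> f i = g i) -> sumR n f = sumR n g.
Proof.
  induction n; simpl; intros H; auto.
  rewrite IHn by (intros; apply H; lia). rewrite H by lia. reflexivity.
Qed.

Lemma sumR_plus n f g : sumR n (fun i => f i + g i) = sumR n f + sumR n g.
Proof. induction n; simpl; [lra| rewrite IHn; lra]. Qed.

Lemma sumR_scal n c f : sumR n (fun i => c * f i) = c * sumR n f.
Proof. induction n; simpl; [lra| rewrite IHn; lra]. Qed.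

Lemma sumR_minus n f g : sumR n (fun i => f i - g i) = sumR n f - sumR n g.
Proof. induction n; simpl; [lra| rewrite IHn; lra]. Qed.

Lemma sumR_zero n f : (forall i, (i < n)%nat -> f i = 0) -> sumR n f = 0.
Proof. intros H. rewrite (sumR_ext n f (fun _ => 0)) by auto. induction n; simpl; auto; rewrite IHn; [lra|]. intros; apply H; lia. Qed.

Lemma sumR_swap n m (F : nat -> nat -> R) :
  sumR n (fun i => sumR m (fun j => F i j)) = sumR m (fun j => sumR n (fun i => F i j)).
Proof.
  induction n; simpl.
  - symmetry; apply sumR_zero; auto.
  - rewrite IHn. rewrite <- sumR_plus. reflexivity.
Qed.

Lemma sumR_single n f j : (j < n)%nat -> (forall i, (i < n)%nat -> i <> j -> f i = 0) -> sumR n f = f j.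
Proof.
  induction n; intros Hj H; [lia|]. simpl.
  destruct (Nat.eq_dec j n).
  - subst. rewrite sumR_zero; [lra|]. intros; apply H; lia.
  - rewrite IHn by (try lia; intros; apply H; lia). rewrite (H n) by lia. lra.
Qed.

Lemma sumR_ge0 n f : (forall i, (i < n)%nat -> 0 <= f i) -> 0 <= sumR n f.
Proof. induction n; simpl; intros H; [lra|]. assert (0 <= f n) by (apply H; lia).
  assert (0 <= sumR n f) by (apply IHn; intros; apply H; lia). lra. Qed.

Lemma sumR_pos n f j : (j < n)%nat -> (forall i, (i < n)%nat -> 0 <= f i) -> 0 < f j -> 0 < sumR n f.
Proof. induction n; simpl; intros Hj H Hp; [lia|].
  destruct (Nat.eq_dec j n).
  - subst. assert (0 <= sumR n f) by (apply sumR_ge0; intros; apply H; lia). lra.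
  - assert (0 < sumR n f) by (apply IHn; auto; lia). assert (0 <= f n) by (apply H; lia). lra.
Qed.

Definition Reqb (x y : R) : bool := if Req_EM_T x y then true else false.

Lemma compl_lemma m (c mu : nat -> R) : forall (P : R -> bool),
  (forall nu, P nu = false -> sumR m (fun i => if Req_EM_T (mu i) nu then c i else 0) = 0) ->
  sumR m (fun i => if P (mu i) then 0 else c i) = 0.
Proof.
  induction m; intros P H; simpl; auto.
  destruct (P (mu m)) eqn:Pm.
  - rewrite IHm; [lra|]. intros nu Pnu. specialize (H nu Pnu). simpl in H.
    destruct (Req_EM_T (mu m) nu); [congruence|]. lra.
  - pose (P' := fun x => orb (P x) (Reqb x (mu m))).
    assert (E: sumR m (fun i => if P (mu i) then 0 else c i) =
      sumR m (fun i => if P' (mu i) then 0 else c i) +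
      sumR m (fun i => if Req_EM_T (mu i) (mu m) then c i else 0)).
    { rewrite <- sumR_plus. apply sumR_ext. intros i _. unfold P', Reqb.
      destruct (P (mu i)) eqn:Pi; destruct (Req_EM_T (mu i) (mu m)); simpl; try lra.
      rewrite e in Pi; congruence. }
    rewrite E. rewrite IHm.
    + specialize (H (mu m) Pm). simpl in H. destruct (Req_EM_T (mu m) (mu m)); [lra|congruence].
    + intros nu Pnu. unfold P', Reqb in Pnu. apply Bool.orb_false_elim in Pnu. destruct Pnu as [Pnu Hn].
      specialize (H nu Pnu). simpl in H. destruct (Req_EM_T nu (mu m)); [discriminate|].
      destruct (Req_EM_T (mu m) nu); [congruence|]. lra.
Qed.

Lemma vander M (mu : nat -> R) : forall b : nat -> R,
  (forall n, sumR M (fun i => b i * mu i ^ n) = 0) ->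
  forall nu, sumR M (fun i => if Req_EM_T (mu i) nu then b i else 0) = 0.
Proof.
  induction M; intros b H nu; simpl; auto.
  pose (b' := fun i => b i * (mu i - mu M)).
  assert (H' : forall n, sumR M (fun i => b' i * mu i ^ n) = 0).
  { intros n. unfold b'.
    replace (sumR M (fun i => b i * (mu i - mu M) * mu i ^ n)) with
      (sumR M (fun i => b i * mu i ^ (S n)) - mu M * sumR M (fun i => b i * mu i ^ n)).
    - pose proof (H (S n)) as H1. pose proof (H n) as H2. simpl in H1, H2. simpl.
      assert (sumR M (fun i => b i * (mu i * mu i ^ n)) = - (b M * (mu M * mu M ^ n))) by lra.
      assert (sumR M (fun i => b i * mu i ^ n) = - (b M * mu M ^ n)) by lra.
      rewrite H0, H3. ring.
    - rewrite <- sumR_scal, <- sumR_minus. apply sumR_ext. intros. simpl. ring. }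
  pose proof (IHM b' H') as IH.
  assert (Hg : forall nu, nu <> mu M -> sumR M (fun i => if Req_EM_T (mu i) nu then b i else 0) = 0).
  { intros nu0 Hne. specialize (IH nu0).
    assert (E : sumR M (fun i => if Req_EM_T (mu i) nu0 then b' i else 0) =
       (nu0 - mu M) * sumR M (fun i => if Req_EM_T (mu i) nu0 then b i else 0)).
    { rewrite <- sumR_scal. apply sumR_ext. intros i _. unfold b'.
      destruct (Req_EM_T (mu i) nu0); [subst; ring | ring]. }
    rewrite E in IH. apply Rmult_integral in IH. destruct IH as [IH|IH]; auto.
    exfalso; apply Hne; lra. }
  destruct (Req_EM_T (mu M) nu) as [e|ne].
  - subst nu.
    pose proof (compl_lemma M b mu (fun x => Reqb x (mu M))) as C.
    assert (C' : sumR M (fun i => if Reqb (mu i) (mu M) then 0 else b i) = 0).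
    { apply C. intros nu Hn. apply Hg. unfold Reqb in Hn. destruct (Req_EM_T nu (mu M)); congruence. }
    pose proof (H 0%nat) as H0. simpl in H0.
    assert (E : sumR M (fun i => b i * 1) = sumR M (fun i => if Req_EM_T (mu i) (mu M) then b i else 0)
        + sumR M (fun i => if Reqb (mu i) (mu M) then 0 else b i)).
    { rewrite <- sumR_plus. apply sumR_ext. intros. unfold Reqb. destruct (Req_EM_T (mu i) (mu M)); lra. }
    lra.
  - rewrite Hg by auto. lra.
Qed.

Definition clamp (L x : R) : R := if Rle_dec x 0 then 0 else if Rle_dec L x then L else x.

Lemma clamp_in L x : 0 <= L -> 0 <= clamp L x <= L.
Proof. unfold clamp; intros; destruct (Rle_dec x 0); [lra|]; destruct (Rle_dec L x); lra. Qed.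

Lemma clamp_id L x : 0 <= x <= L -> clamp L x = x.
Proof. unfold clamp; intros; destruct (Rle_dec x 0); [lra|]; destruct (Rle_dec L x); lra. Qed.

Lemma clamp_lip L x y : 0 <= L -> Rabs (clamp L y - clamp L x) <= Rabs (y - x).
Proof. intros HL. unfold clamp.
  destruct (Rle_dec x 0), (Rle_dec y 0); try destruct (Rle_dec L x); try destruct (Rle_dec L y);
  unfold Rabs; repeat destruct Rcase_abs; lra. Qed.

Lemma dw_unique_zero L f u d r : 0 < L -> 0 <= u <= L -> 0 < r ->
  (forall v, 0 <= v <= L -> Rabs (v - u) < r -> f v = 0) ->
  deriv_within L f u d -> d = 0.
Proof.
  intros HL Hu Hr Hz Hd.
  destruct (Req_dec d 0) as [|Hne]; auto. exfalso.
  assert (Hpos : 0 < Rabs d / 2) by (pose proof (Rabs_pos_lt d Hne); lra).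
  destruct (Hd _ Hpos) as [delta [Hdel H]].
  set (s := Rmin r (Rmin delta L) / 2).
  assert (Hs : 0 < s) by (unfold s; assert (0 < Rmin r (Rmin delta L)) by (apply Rmin_glb_lt; [|apply Rmin_glb_lt]; lra); lra).
  assert (Hs1 : s < r) by (unfold s; pose proof (Rmin_l r (Rmin delta L)); lra).
  assert (Hs2 : s < delta) by (unfold s; pose proof (Rmin_r r (Rmin delta L)); pose proof (Rmin_l delta L); lra).
  assert (Hs3 : s <= L / 2) by (unfold s; pose proof (Rmin_r r (Rmin delta L)); pose proof (Rmin_r delta L); lra).
  assert (Hfu : f u = 0) by (apply Hz; auto; rewrite Rminus_diag, Rabs_R0; lra).
  destruct (Rle_dec (u + s) L).
  - assert (Hv : 0 <= u + s <= L) by lra.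
    assert (Habs : Rabs (u + s - u) = s) by (replace (u+s-u) with s by ring; apply Rabs_pos_eq; lra).
    specialize (H (u + s) Hv ltac:(lra)). rewrite Hz in H by (auto; lra). rewrite Hfu, Habs in H.
    replace (0 - 0 - d * (u + s - u)) with (- (d * s)) in H by ring.
    rewrite Rabs_Ropp, Rabs_mult, (Rabs_pos_eq s) in H by lra.
    pose proof (Rabs_pos_lt d Hne). nra.
  - assert (Hv : 0 <= u - s <= L) by lra.
    assert (Habs : Rabs (u - s - u) = s) by (replace (u-s-u) with (-s) by ring; rewrite Rabs_Ropp; apply Rabs_pos_eq; lra).
    specialize (H (u - s) Hv ltac:(lra)). rewrite Hz in H by (auto; lra). rewrite Hfu, Habs in H.
    replace (0 - 0 - d * (u - s - u)) with (d * s) in H by ring.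
    rewrite Rabs_mult, (Rabs_pos_eq s) in H by lra.
    pose proof (Rabs_pos_lt d Hne). nra.
Qed.

Lemma dw_plus L f g u df dg : deriv_within L f u df -> deriv_within L g u dg ->
  deriv_within L (fun x => f x + g x) u (df + dg).
Proof.
  intros Hf Hg eps He.
  destruct (Hf (eps/2) ltac:(lra)) as [d1 [Hd1 H1]].
  destruct (Hg (eps/2) ltac:(lra)) as [d2 [Hd2 H2]].
  exists (Rmin d1 d2); split; [apply Rmin_glb_lt; auto|].
  intros v Hv Hvu. pose proof (Rmin_l d1 d2); pose proof (Rmin_r d1 d2).
  specialize (H1 v Hv ltac:(lra)); specialize (H2 v Hv ltac:(lra)).
  replace (f v + g v - (f u + g u) - (df + dg) * (v - u)) with
    ((f v - f u - df * (v - u)) + (g v - g u - dg * (v - u))) by ring.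
  eapply Rle_trans; [apply Rabs_triang|]. lra.
Qed.

Lemma dw_scal L f u df c : deriv_within L f u df ->
  deriv_within L (fun x => c * f x) u (c * df).
Proof.
  intros Hf eps He.
  assert (Hc : 0 < Rabs c + 1) by (pose proof (Rabs_pos c); lra).
  destruct (Hf (eps / (Rabs c + 1))) as [d1 [Hd1 H1]].
  { apply Rdiv_lt_0_compat; lra. }
  exists d1; split; auto. intros v Hv Hvu. specialize (H1 v Hv Hvu).
  replace (c * f v - c * f u - c * df * (v - u)) with (c * (f v - f u - df * (v - u))) by ring.
  rewrite Rabs_mult.
  apply Rle_trans with (Rabs c * (eps / (Rabs c + 1) * Rabs (v - u))).
  { apply Rmult_le_compat_l; auto. apply Rabs_pos. }
  assert (Rabs c * (eps / (Rabs c + 1)) <= eps).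
  { unfold Rdiv. rewrite <- Rmult_assoc. apply Rle_trans with ((Rabs c + 1) * eps * / (Rabs c + 1)).
    - apply Rmult_le_compat_r; [left; apply Rinv_0_lt_compat; lra|]. pose proof (Rabs_pos c); nra.
    - field_simplify; lra. }
  pose proof (Rabs_pos (v - u)). nra.
Qed.

Lemma dw_zero L u : deriv_within L (fun _ => 0) u 0.
Proof. intros eps He. exists 1; split; [lra|]. intros v Hv Hvu. replace (0-0-0*(v-u)) with 0 by ring.
  rewrite Rabs_R0. pose proof (Rabs_pos (v-u)). nra. Qed.

Lemma dw_ext L f g u d : (forall x, f x = g x) -> deriv_within L f u d -> deriv_within L g u d.
Proof. intros E H eps He. destruct (H eps He) as [d0 [? H1]]. exists d0; split; auto.
  intros. rewrite <- !E. auto. Qed.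

Lemma dw_sum L n (F : nat -> R -> R) (dF : nat -> R) u :
  (forall i, (i < n)%nat -> deriv_within L (F i) u (dF i)) ->
  deriv_within L (fun x => sumR n (fun i => F i x)) u (sumR n dF).
Proof.
  induction n; intros H; simpl.
  - apply dw_zero.
  - apply (dw_plus L (fun x => sumR n (fun i => F i x)) (F n)); [apply IHn; intros; apply H; lia| apply H; lia].
Qed.

Lemma dw_cont L f u d : deriv_within L f u d -> cont_within L f u.
Proof.
  intros H eps He.
  destruct (H 1 ltac:(lra)) as [d1 [Hd1 H1]].
  assert (Hc : 0 < Rabs d + 1) by (pose proof (Rabs_pos d); lra).
  exists (Rmin d1 (eps / (Rabs d + 1))); split.
  { apply Rmin_glb_lt; auto. apply Rdiv_lt_0_compat; lra. }
  intros v Hv Hvu. pose proof (Rmin_l d1 (eps / (Rabs d + 1))); pose proof (Rmin_r d1 (eps / (Rabs d + 1))).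
  specialize (H1 v Hv ltac:(lra)).
  replace (f v - f u) with ((f v - f u - d * (v - u)) + d * (v - u)) by ring.
  eapply Rle_lt_trans; [apply Rabs_triang|]. rewrite Rabs_mult.
  assert (Rabs (v - u) * (Rabs d + 1) < eps).
  { apply Rlt_le_trans with (eps / (Rabs d + 1) * (Rabs d + 1)).
    - apply Rmult_lt_compat_r; lra.
    - field_simplify; lra. }
  pose proof (Rabs_pos (v - u)). pose proof (Rabs_pos d). nra.
Qed.

Lemma cont_clamp L f x : 0 <= L -> (forall u, 0 <= u <= L -> cont_within L f u) ->
  continuity_pt (fun x => f (clamp L x)) x.
Proof.
  intros HL Hc eps He.
  destruct (Hc (clamp L x) (clamp_in L x HL) eps He) as [d [Hd H]].
  exists d; split; auto. intros y [_ Hy]. simpl in *. unfold R_dist in *.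
  apply H; [apply clamp_in; auto|]. eapply Rle_lt_trans; [apply clamp_lip; auto| auto].
Qed.

Lemma dw_derivable L f u d : 0 < u < L -> deriv_within L f u d ->
  derivable_pt_lim (fun x => f (clamp L x)) u d.
Proof.
  intros Hu H eps He.
  destruct (H (eps/2) ltac:(lra)) as [d1 [Hd1 H1]].
  assert (Hp : 0 < Rmin d1 (Rmin u (L - u))) by (apply Rmin_glb_lt; [|apply Rmin_glb_lt]; lra).
  exists (mkposreal _ Hp). intros h Hh Hhd. simpl in Hhd.
  pose proof (Rmin_l d1 (Rmin u (L - u))); pose proof (Rmin_r d1 (Rmin u (L - u))).
  pose proof (Rmin_l u (L - u)); pose proof (Rmin_r u (L - u)).
  assert (Hab : - Rabs h <= h <= Rabs h) by (unfold Rabs; destruct Rcase_abs; lra).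
  rewrite !clamp_id by lra.
  specialize (H1 (u + h) ltac:(lra)). replace (u + h - u) with h in H1 by ring.
  specialize (H1 ltac:(lra)).
  replace ((f (u + h) - f u) / h - d) with ((f (u + h) - f u - d * h) / h) by (field; auto).
  unfold Rdiv. rewrite Rabs_mult, Rabs_inv.
  assert (Hhp : 0 < Rabs h) by (apply Rabs_pos_lt; auto).
  apply Rle_lt_trans with (eps / 2 * Rabs h * / Rabs h).
  - apply Rmult_le_compat_r; auto. left; apply Rinv_0_lt_compat; auto.
  - field_simplify; lra.
Qed.
Lemma key_ineq a b p K : Rabs p <= K -> Rabs (2 * a * b * p) <= K * (a * a + b * b).
Proof.
  intros Hp.
  rewrite !Rabs_mult. rewrite (Rabs_pos_eq 2) by lra.
  assert (Ea : a * a = Rabs a * Rabs a) by (rewrite <- Rabs_mult; rewrite Rabs_pos_eq; nra).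
  assert (Eb : b * b = Rabs b * Rabs b) by (rewrite <- Rabs_mult; rewrite Rabs_pos_eq; nra).
  rewrite Ea, Eb. pose proof (Rabs_pos a); pose proof (Rabs_pos b); pose proof (Rabs_pos p).
  assert (X : 2 * Rabs a * Rabs b <= Rabs a * Rabs a + Rabs b * Rabs b).
  { clear Ea Eb. pose proof (Rle_0_sqr (Rabs a - Rabs b)). unfold Rsqr in *. nra. }
  apply Rle_trans with ((Rabs a * Rabs a + Rabs b * Rabs b) * Rabs p).
  - apply Rmult_le_compat_r; auto.
  - rewrite Rmult_comm. apply Rmult_le_compat_r; nra.
Qed.

Lemma is_derive_eq (f : R -> R) x l l' : l = l' -> is_derive f x l -> is_derive f x l'.
Proof. intros ->; auto. Qed.

Lemma cont_to_continuous f x : continuity_pt f x -> continuous f x.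
Proof. intros H. apply continuity_pt_filterlim. auto. Qed.

Lemma exp_lin_derive s x : is_derive (fun t => exp (s * t)) x (s * exp (s * x)).
Proof.
  assert (dE : is_derive (fun t => s * t) x (s * 1)) by (apply is_derive_scal; apply (is_derive_eq _ _ one 1); [reflexivity| apply (@is_derive_id R_AbsRing)]).
  eapply is_derive_eq; [|apply (is_derive_comp exp (fun t => s * t)); [apply is_derive_exp| exact dE]].
  simpl. unfold scal; simpl; unfold mult; simpl. ring.
Qed.

Lemma ode_unique L h h1 h2 q t0 :
  0 < L ->
  (forall u, 0 <= u <= L -> deriv_within L h u (h1 u) /\ deriv_within L h1 u (h2 u) /\ h2 u = q u * h u) ->
  (forall u, 0 <= u <= L -> cont_within L q u) ->
  0 <= t0 <= L -> h t0 = 0 -> h1 t0 = 0 -> forall u, 0 <= u <= L -> h u = 0.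
Proof.
  intros HL Hd Hq Ht0 Hh0 Hh10.
  set (Qc := fun x => q (clamp L x)).
  assert (HQc : forall x, continuity_pt Qc x) by (intros; apply cont_clamp; auto; lra).
  destruct (continuity_ab_maj Qc 0 L ltac:(lra) (fun c _ => HQc c)) as [Mx [HMx _]].
  destruct (continuity_ab_min Qc 0 L ltac:(lra) (fun c _ => HQc c)) as [mx [Hmx _]].
  set (K := 1 + (Rabs (Qc Mx) + Rabs (Qc mx))).
  assert (HK : forall c, 0 <= c <= L -> Rabs (1 + q c) <= K).
  { intros c Hc. specialize (HMx c Hc); specialize (Hmx c Hc).
    assert (Qc c = q c) by (unfold Qc; rewrite clamp_id; auto).
    unfold K. revert HMx Hmx. generalize (Qc Mx) (Qc mx). intros. 
    unfold Rabs; repeat destruct Rcase_abs; lra. }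
  assert (HK0 : 0 <= K) by (unfold K; pose proof (Rabs_pos (Qc Mx)); pose proof (Rabs_pos (Qc mx)); lra).
  set (H := fun x => h (clamp L x)). set (H1 := fun x => h1 (clamp L x)).
  assert (cH : forall x, continuity_pt H x).
  { intros; apply cont_clamp; [lra|]. intros u Hu. apply (dw_cont _ _ _ _ (proj1 (Hd u Hu))). }
  assert (cH1 : forall x, continuity_pt H1 x).
  { intros; apply cont_clamp; [lra|]. intros u Hu. apply (dw_cont _ _ _ _ (proj1 (proj2 (Hd u Hu)))). }
  assert (Gen : forall s, forall a b, 0 <= a <= L -> 0 <= b <= L ->
     exists c, Rmin a b <= c <= Rmax a b /\
      (H b * H b + H1 b * H1 b) * exp (s * b) - (H a * H a + H1 a * H1 a) * exp (s * a) =
      ((2 * h c * h1 c + 2 * h1 c * h2 c) * exp (s * c) + (h c * h c + h1 c * h1 c) * (s * exp (s * c))) * (b - a)).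
  { intros s a b Ha Hb.
    apply (MVT_gen (fun x => (H x * H x + H1 x * H1 x) * exp (s * x)) a b
      (fun c => (2 * h c * h1 c + 2 * h1 c * h2 c) * exp (s * c) + (h c * h c + h1 c * h1 c) * (s * exp (s * c)))).
    - intros x Hx. assert (Hx' : 0 < x < L).
      { split; [apply Rle_lt_trans with (Rmin a b); [apply Rmin_glb|]; lra|].
        apply Rlt_le_trans with (Rmax a b); [lra| apply Rmax_lub; lra]. }
      assert (HxL : 0 <= x <= L) by lra.
      destruct (Hd x HxL) as [D1 [D2 _]].
      assert (dH : is_derive H x (h1 x)) by (apply is_derive_Reals; apply dw_derivable; auto).
      assert (dH1 : is_derive H1 x (h2 x)) by (apply is_derive_Reals; apply dw_derivable; auto).
      assert (dX := exp_lin_derive s x).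
      eapply is_derive_eq; [| apply Derive.is_derive_mult; [apply (is_derive_plus (fun t => H t * H t) (fun t => H1 t * H1 t)); apply Derive.is_derive_mult; eauto| exact dX]].
      unfold H, H1. rewrite clamp_id by auto. simpl. unfold plus; simpl. ring.
    - intros x _.
      apply (continuity_pt_mult (fun x => H x * H x + H1 x * H1 x) (fun x => exp (s * x))).
      + apply (continuity_pt_plus (fun x => H x * H x) (fun x => H1 x * H1 x));
        apply (continuity_pt_mult); auto.
      + apply derivable_continuous_pt. exists (s * exp (s * x)). apply is_derive_Reals. apply exp_lin_derive. }
  intros u Hu.
  assert (HE : 0 <= h u * h u + h1 u * h1 u <= 0).
  2:{ nra. }
  split; [nra|].
  assert (Hc2 : forall c, 0 <= c <= L -> Rabs (2 * h c * h1 c + 2 * h1 c * h2 c) <= K * (h c * h c + h1 c * h1 c)).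
  { intros c Hc. destruct (Hd c Hc) as [_ [_ E]]. rewrite E.
    replace (2 * h c * h1 c + 2 * h1 c * (q c * h c)) with (2 * h c * h1 c * (1 + q c)) by ring.
    apply key_ineq; auto. }
  destruct (Rle_dec t0 u).
  - destruct (Gen (-K) t0 u Ht0 Hu) as [c [Hc E]].
    rewrite Rmin_left, Rmax_right in Hc by lra.
    assert (HcL : 0 <= c <= L) by lra.
    unfold H, H1 in E. rewrite !clamp_id in E by auto. rewrite Hh0, Hh10 in E.
    specialize (Hc2 c HcL). pose proof (exp_pos (-K * c)). pose proof (exp_pos (-K * u)).
    assert (Hn : (2 * h c * h1 c + 2 * h1 c * h2 c) * exp (- K * c) + (h c * h c + h1 c * h1 c) * (- K * exp (- K * c)) <= 0).
    { assert (2 * h c * h1 c + 2 * h1 c * h2 c <= K * (h c * h c + h1 c * h1 c)) by (eapply Rle_trans; [apply Rle_abs| auto]).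
      nra. }
    assert ((h u * h u + h1 u * h1 u) * exp (- K * u) <= 0) by nra.
    nra.
  - destruct (Gen K u t0 Hu Ht0) as [c [Hc E]].
    rewrite Rmin_left, Rmax_right in Hc by lra.
    assert (HcL : 0 <= c <= L) by lra.
    unfold H, H1 in E. rewrite !clamp_id in E by auto. rewrite Hh0, Hh10 in E.
    specialize (Hc2 c HcL). pose proof (exp_pos (K * c)). pose proof (exp_pos (K * u)).
    assert (Hn : 0 <= (2 * h c * h1 c + 2 * h1 c * h2 c) * exp (K * c) + (h c * h c + h1 c * h1 c) * (K * exp (K * c))).
    { assert (- (K * (h c * h c + h1 c * h1 c)) <= 2 * h c * h1 c + 2 * h1 c * h2 c).
      { pose proof (Rabs_pos (2 * h c * h1 c + 2 * h1 c * h2 c)).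
        assert (-(2 * h c * h1 c + 2 * h1 c * h2 c) <= Rabs (2 * h c * h1 c + 2 * h1 c * h2 c)) by (rewrite <- Rabs_Ropp; apply Rle_abs).
        lra. }
      nra. }
    assert ((h u * h u + h1 u * h1 u) * exp (K * u) <= 0) by nra.
    nra.
Qed.
Lemma cpt_sum n (F : nat -> R -> R) x : (forall i, (i < n)%nat -> continuity_pt (F i) x) ->
  continuity_pt (fun x => sumR n (fun i => F i x)) x.
Proof.
  induction n; intros H; simpl.
  - apply continuity_pt_const. intros a b; reflexivity.
  - apply (continuity_pt_plus (fun x => sumR n (fun i => F i x)) (F n)); [apply IHn; intros; apply H; lia| apply H; lia].
Qed.

Lemma exRInt_cont (g G : R -> R) L : 0 < L -> (forall x, 0 <= x <= L -> g x = G x) ->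
  (forall x, continuity_pt G x) -> ex_RInt g 0 L.
Proof.
  intros HL E C. apply (ex_RInt_ext G).
  { intros x Hx. rewrite Rmin_left, Rmax_right in Hx by lra. symmetry; apply E; lra. }
  apply (@ex_RInt_continuous R_CompleteNormedModule). intros z _. apply continuity_pt_filterlim. apply C.
Qed.

Lemma RInt_scalR (f : R -> R) a b c : ex_RInt f a b -> RInt (fun x => c * f x) a b = c * RInt f a b.
Proof. intros H. exact (RInt_scal f a b c H). Qed.

Lemma RInt_zeroR a b : RInt (fun _ => 0) a b = 0.
Proof. rewrite RInt_const. unfold scal; simpl; unfold mult; simpl. ring. Qed.

Lemma ex_RInt_sumR n (F : nat -> R -> R) a b : (forall i, (i < n)%nat -> ex_RInt (F i) a b) ->
  ex_RInt (fun t => sumR n (fun i => F i t)) a b.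
Proof.
  induction n; intros H; simpl.
  - apply ex_RInt_const.
  - apply (ex_RInt_plus (fun t => sumR n (fun i => F i t)) (F n)); [apply IHn; intros; apply H; lia| apply H; lia].
Qed.

Lemma RInt_sumR n (F : nat -> R -> R) a b : (forall i, (i < n)%nat -> ex_RInt (F i) a b) ->
  RInt (fun t => sumR n (fun i => F i t)) a b = sumR n (fun i => RInt (F i) a b).
Proof.
  induction n; intros H; simpl.
  - apply RInt_zeroR.
  - rewrite <- IHn by (intros; apply H; lia).
    exact (RInt_plus (fun t => sumR n (fun i => F i t)) (F n) a b
      (ex_RInt_sumR n F a b (fun i Hi => H i ltac:(lia))) (H n ltac:(lia))).
Qed.

Lemma RInt_sq_pos g L t : 0 < L -> 0 <= t <= L ->
  (forall x, continuity_pt (fun x => g (clamp L x)) x) -> g t <> 0 ->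
  0 < RInt (fun x => g x * g x) 0 L.
Proof.
  intros HL Ht C Hg.
  set (G := fun x => g (clamp L x) * g (clamp L x)).
  assert (CG : forall x, continuity_pt G x) by (intros; apply (continuity_pt_mult (fun x => g (clamp L x)) (fun x => g (clamp L x))); auto).
  assert (cG : forall x, continuous G x) by (intros; apply continuity_pt_filterlim; auto).
  assert (E : RInt (fun x => g x * g x) 0 L = RInt G 0 L).
  { apply RInt_ext. intros x Hx. rewrite Rmin_left, Rmax_right in Hx by lra. unfold G. rewrite clamp_id by lra. reflexivity. }
  rewrite E.
  assert (Gt : G t = g t * g t) by (unfold G; rewrite clamp_id; auto).
  assert (Gtp : 0 < G t) by (rewrite Gt; assert (0 < g t * g t) by (destruct (Rlt_or_le 0 (g t)); [nra| assert (g t < 0) by (destruct H; [auto| congruence]); nra]); auto).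
  destruct (CG t (G t / 2) ltac:(lra)) as [d [Hd Hc]].
  set (al := Rmax 0 (t - d/2)). set (be := Rmin L (t + d/2)).
  assert (Hal : 0 <= al /\ t - d/2 <= al) by (split; [apply Rmax_l| apply Rmax_r]).
  assert (Hbe : be <= L /\ be <= t + d/2) by (split; [apply Rmin_l| apply Rmin_r]).
  assert (Hal2 : al <= t) by (apply Rmax_lub; lra).
  assert (Hbe2 : t <= be) by (apply Rmin_glb; lra).
  assert (Hab : al < be).
  { unfold al, be. unfold Rmax, Rmin. destruct Rle_dec; destruct Rle_dec; lra. }
  assert (ex : forall a b, ex_RInt G a b) by (intros; apply (@ex_RInt_continuous R_CompleteNormedModule); auto).
  pose proof (RInt_Chasles G 0 al L (ex _ _) (ex _ _)) as C1.
  pose proof (RInt_Chasles G al be L (ex _ _) (ex _ _)) as C2.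
  unfold plus in C1, C2; simpl in C1, C2.
  assert (P1 : 0 <= RInt G 0 al) by (apply RInt_ge_0; [lra| auto| intros; unfold G; nra]).
  assert (P3 : 0 <= RInt G be L) by (apply RInt_ge_0; [lra| auto| intros; unfold G; nra]).
  assert (P2 : RInt (fun _ => 0) al be < RInt G al be).
  { apply RInt_lt; auto. { intros; apply continuous_const. }
    intros x Hx. assert (Hxt : Rabs (x - t) < d) by (unfold Rabs; destruct Rcase_abs; lra).
    destruct (Req_dec x t) as [->|Hne]; [lra|].
    specialize (Hc x (conj (conj I (not_eq_sym Hne)) Hxt)). simpl in Hc. unfold R_dist in Hc.
    unfold Rabs in Hc; destruct Rcase_abs in Hc; lra. }
  rewrite RInt_zeroR in P2. lra.
Qed.
Lemma sumN_ge1 n g i : (i < n)%nat -> (g i <= sumN n g)%nat.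
Proof. induction n; simpl; intros; [lia|]. destruct (Nat.eq_dec i n); [subst; lia|]. specialize (IHn ltac:(lia)); lia. Qed.

Lemma sumN_ge2 n g i j : (i < n)%nat -> (j < n)%nat -> i <> j -> (g i + g j <= sumN n g)%nat.
Proof. induction n; simpl; intros; [lia|].
  destruct (Nat.eq_dec i n); [subst; pose proof (sumN_ge1 n g j ltac:(lia)); lia|].
  destruct (Nat.eq_dec j n); [subst; pose proof (sumN_ge1 n g i ltac:(lia)); lia|].
  specialize (IHn ltac:(lia) ltac:(lia) ltac:(lia)); lia. Qed.

Definition incid (G : metric_graph) e v := src G e = v \/ tgt G e = v.

Lemma cnt_ge1 G e v : incid G e v ->
  (1 <= (if Nat.eqb (src G e) v then 1 else 0) + (if Nat.eqb (tgt G e) v then 1 else 0))%nat.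
Proof. intros [H|H]; rewrite H, Nat.eqb_refl; destruct Nat.eqb; lia. Qed.

Lemma deg_two_edges G v e1 e2 : (e1 < nE G)%nat -> (e2 < nE G)%nat -> e1 <> e2 ->
  incid G e1 v -> incid G e2 v -> (2 <= deg G v)%nat.
Proof.
  intros. unfold deg.
  pose proof (sumN_ge2 (nE G) (fun e => ((if Nat.eqb (src G e) v then 1 else 0) + (if Nat.eqb (tgt G e) v then 1 else 0))%nat) e1 e2 H H0 H1).
  pose proof (cnt_ge1 G e1 v H2). pose proof (cnt_ge1 G e2 v H3). simpl in *. lia.
Qed.

Lemma deg_loop G v e : (e < nE G)%nat -> src G e = v -> tgt G e = v -> (2 <= deg G v)%nat.
Proof.
  intros. unfold deg.
  pose proof (sumN_ge1 (nE G) (fun e => ((if Nat.eqb (src G e) v then 1 else 0) + (if Nat.eqb (tgt G e) v then 1 else 0))%nat) e H).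
  simpl in H2. rewrite H0, H1, Nat.eqb_refl in H2. lia.
Qed.

Lemma reach_closed G e : (e < nE G)%nat -> (deg G (src G e) < 2)%nat -> (deg G (tgt G e) < 2)%nat ->
  forall x y, clos_refl_trans nat (adjacent G) x y ->
  (x = src G e \/ x = tgt G e) -> (y = src G e \/ y = tgt G e).
Proof.
  intros He Hs Ht x y Hr. induction Hr; auto.
  intros Hx. destruct H as [e2 [He2 Hadj]].
  destruct (Nat.eq_dec e2 e) as [->|Hne].
  - destruct Hadj as [[A B]|[A B]]; subst; auto.
  - exfalso. assert (I1 : incid G e2 x) by (unfold incid; destruct Hadj as [[A B]|[A B]]; auto).
    assert (I2 : incid G e x) by (unfold incid; destruct Hx; auto).
    pose proof (deg_two_edges G x e2 e He2 He Hne I1 I2).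
    destruct Hx; subst; lia.
Qed.

Lemma only_edge G e : metric_graph_wf G -> (e < nE G)%nat -> (deg G (src G e) < 2)%nat -> (deg G (tgt G e) < 2)%nat ->
  forall e', (e' < nE G)%nat -> e' = e.
Proof.
  intros [_ [Hw Hc]] He Hs Ht e' He'.
  destruct (Hw e He) as [_ [Hse _]]. destruct (Hw e' He') as [_ [Hse' _]].
  pose proof (reach_closed G e He Hs Ht _ _ (Hc _ _ Hse Hse') (or_introl eq_refl)) as R.
  destruct (Nat.eq_dec e' e) as [|Hne]; auto. exfalso.
  assert (I1 : incid G e' (src G e')) by (left; auto).
  destruct R as [R|R].
  - pose proof (deg_two_edges G _ e' e He' He Hne I1 ltac:(rewrite R; left; auto)). rewrite R in H. lia.
  - pose proof (deg_two_edges G _ e' e He' He Hne I1 ltac:(rewrite R; right; auto)). rewrite R in H. lia.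
Qed.
Definition eig_body (G : metric_graph) (W : nat -> R -> R) (lam : R)
    (f : nat -> R -> R) (D1 D2 : nat -> R -> R) : Prop :=
    (forall e, (e < nE G)%nat -> forall t, 0 <= t <= len G e ->
       deriv_within (len G e) (f e) t (D1 e t) /\
       deriv_within (len G e) (D1 e) t (D2 e t) /\
       - D2 e t + W e t * f e t = lam * f e t) /\
    (forall v, (v < nV G)%nat ->
       ((deg G v = 1%nat ->
           forall e b, (e < nE G)%nat -> end_vertex G e b = v -> f e (end_pos G e b) = 0) /\
        ((2 <= deg G v)%nat ->
           (forall e1 b1 e2 b2, same_vertex G e1 b1 e2 b2 -> end_vertex G e1 b1 = v ->
              f e1 (end_pos G e1 b1) = f e2 (end_pos G e2 b2)) /\
           sumR (nE G) (fun e =>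
              (if Nat.eqb (src G e) v then D1 e 0 else 0) +
              (if Nat.eqb (tgt G e) v then - D1 e (len G e) else 0)) = 0))).

Lemma choice_eig G W (lam : nat -> R) (f : nat -> nat -> R -> R) :
  (forall k, is_eigenpair G W (lam k) (f k)) ->
  exists D1 D2 : nat -> nat -> R -> R, forall k, eig_body G W (lam k) (f k) (D1 k) (D2 k).
Proof.
  intros H.
  assert (H1 : forall k, exists D1, exists D2, eig_body G W (lam k) (f k) D1 D2) by (intro k; exact (proj1 (H k))).
  pose (D1 := fun k => proj1_sig (constructive_indefinite_description _ (H1 k))).
  assert (H2 : forall k, exists D2, eig_body G W (lam k) (f k) (D1 k) D2)
    by (intro k; exact (proj2_sig (constructive_indefinite_description _ (H1 k)))).
  pose (D2 := fun k => proj1_sig (constructive_indefinite_description _ (H2 k))).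
  exists D1, D2. intro k. exact (proj2_sig (constructive_indefinite_description _ (H2 k))).
Qed.

Lemma dw_lin L M (w : nat -> R) (F DF : nat -> R -> R) v :
  (forall i, (i < M)%nat -> deriv_within L (F i) v (DF i v)) ->
  deriv_within L (fun x => sumR M (fun i => w i * F i x)) v (sumR M (fun i => w i * DF i v)).
Proof.
  intros H. apply (dw_sum L M (fun i x => w i * F i x) (fun i => w i * DF i v)).
  intros i Hi. apply dw_scal. auto.
Qed.

Lemma zero_on_J L t eps F dF u : 0 < L ->
  (forall v, 0 <= v <= L -> Rabs (v - t) < eps -> F v = 0) ->
  0 <= u <= L -> Rabs (u - t) < eps -> deriv_within L F u dF -> dF = 0.
Proof.
  intros HL Hz Hu Hut Hd. apply (dw_unique_zero L F u dF (eps - Rabs (u - t))); auto; [lra|].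
  intros v Hv Hvu. apply Hz; auto.
  replace (v - t) with ((v - u) + (u - t)) by ring. eapply Rle_lt_trans; [apply Rabs_triang| lra].
Qed.

Lemma sumR_if M (w : nat -> R) (b : bool) (X : nat -> R) :
  sumR M (fun i => w i * (if b then X i else 0)) = if b then sumR M (fun i => w i * X i) else 0.
Proof. destruct b; [reflexivity|]. apply sumR_zero. intros; ring. Qed.

Lemma sumR_oppw M (w X : nat -> R) : sumR M (fun i => w i * - X i) = - sumR M (fun i => w i * X i).
Proof. replace (- sumR M (fun i => w i * X i)) with (-1 * sumR M (fun i => w i * X i)) by ring.
  rewrite <- sumR_scal. apply sumR_ext; intros; ring. Qed.

Lemma eigen_lin G W M (w : nat -> R) (ks : nat -> nat) (lam : nat -> R) f D1 D2 nu :
  (forall k, eig_body G W (lam k) (f k) (D1 k) (D2 k)) ->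
  (forall i, (i < M)%nat -> w i <> 0 -> lam (ks i) = nu) ->
  eig_body G W nu (fun e t => sumR M (fun i => w i * f (ks i) e t))
    (fun e t => sumR M (fun i => w i * D1 (ks i) e t))
    (fun e t => sumR M (fun i => w i * D2 (ks i) e t)).
Proof.
  intros H Hw. split.
  - intros e He t Ht. split; [|split].
    + apply (dw_lin _ M w (fun i => f (ks i) e) (fun i => D1 (ks i) e)). intros. apply (proj1 (H (ks i)) e He t Ht).
    + apply (dw_lin _ M w (fun i => D1 (ks i) e) (fun i => D2 (ks i) e)). intros. apply (proj1 (H (ks i)) e He t Ht).
    + rewrite <- (sumR_scal M (W e t)), <- (sumR_scal M nu).
      replace (- sumR M (fun i => w i * D2 (ks i) e t)) with (sumR M (fun i => -1 * (w i * D2 (ks i) e t)))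
        by (rewrite sumR_scal; ring).
      rewrite <- sumR_plus. apply sumR_ext. intros i Hi.
      destruct (proj1 (H (ks i)) e He t Ht) as [_ [_ Eq]].
      destruct (Req_dec (w i) 0) as [->|Hne]; [ring|].
      rewrite <- (Hw i Hi Hne). replace (-1 * (w i * D2 (ks i) e t) + W e t * (w i * f (ks i) e t))
        with (w i * (- D2 (ks i) e t + W e t * f (ks i) e t)) by ring. rewrite Eq. ring.
  - intros v Hv. split.
    + intros Hdeg e b He Hb. apply sumR_zero. intros i Hi.
      rewrite (proj1 (proj2 (H (ks i)) v Hv) Hdeg e b He Hb). ring.
    + intros Hdeg. split.
      * intros e1 b1 e2 b2 Hs Hb. apply sumR_ext. intros i Hi.
        rewrite (proj1 (proj2 (proj2 (H (ks i)) v Hv) Hdeg) e1 b1 e2 b2 Hs Hb). reflexivity.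
      * rewrite (sumR_ext _ _ (fun e => sumR M (fun i => w i * ((if Nat.eqb (src G e) v then D1 (ks i) e 0 else 0) +
              (if Nat.eqb (tgt G e) v then - D1 (ks i) e (len G e) else 0))))).
        -- rewrite sumR_swap. apply sumR_zero. intros i Hi. rewrite sumR_scal.
           rewrite (proj2 (proj2 (proj2 (H (ks i)) v Hv) Hdeg)). ring.
        -- intros e He. symmetry.
           rewrite (sumR_ext _ _ (fun i => w i * (if Nat.eqb (src G e) v then D1 (ks i) e 0 else 0) +
              w i * (if Nat.eqb (tgt G e) v then - D1 (ks i) e (len G e) else 0))) by (intros; ring).
           rewrite sumR_plus, !sumR_if, sumR_oppw. reflexivity.
Qed.
Lemma fcont G W lam g D1 D2 e : eig_body G W lam g D1 D2 -> metric_graph_wf G -> (e < nE G)%nat ->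
  forall x, continuity_pt (fun x => g e (clamp (len G e) x)) x.
Proof.
  intros H [_ [Hw _]] He x. destruct (Hw e He) as [HL _].
  apply cont_clamp; [lra|]. intros u Hu. apply (dw_cont _ _ _ _ (proj1 (proj1 H e He u Hu))).
Qed.

Lemma l2_lin G (g : nat -> R -> R) (F : nat -> nat -> R -> R) M (w : nat -> R) :
  metric_graph_wf G ->
  (forall e, (e < nE G)%nat -> forall x, continuity_pt (fun x => g e (clamp (len G e) x)) x) ->
  (forall i, (i < M)%nat -> forall e, (e < nE G)%nat -> forall x, continuity_pt (fun x => F i e (clamp (len G e) x)) x) ->
  l2_inner G g (fun e t => sumR M (fun i => w i * F i e t)) = sumR M (fun i => w i * l2_inner G g (F i)).
Proof.
  intros [_ [Hw _]] Cg CF. unfold l2_inner.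
  rewrite (sumR_ext _ _ (fun e => sumR M (fun i => w i * RInt (fun t => g e t * F i e t) 0 (len G e)))).
  - rewrite sumR_swap. apply sumR_ext. intros i Hi. apply sumR_scal.
  - intros e He. destruct (Hw e He) as [HL _].
    assert (ex : forall i, (i < M)%nat -> ex_RInt (fun t => g e t * F i e t) 0 (len G e)).
    { intros i Hi. apply (exRInt_cont _ (fun x => g e (clamp (len G e) x) * F i e (clamp (len G e) x))); auto.
      - intros x Hx. rewrite clamp_id; auto.
      - intros x. apply (continuity_pt_mult (fun x => g e (clamp (len G e) x)) (fun x => F i e (clamp (len G e) x))); auto. }
    rewrite (RInt_ext _ (fun t => sumR M (fun i => w i * (g e t * F i e t)))).
    + rewrite (RInt_sumR M (fun i t => w i * (g e t * F i e t))).
      * apply sumR_ext. intros i Hi. apply RInt_scalR. auto.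
      * intros i Hi. apply (ex_RInt_scal (fun t => g e t * F i e t)). auto.
    + intros x _. rewrite <- sumR_scal. apply sumR_ext. intros; ring.
Qed.

Lemma l2_zero G (g h : nat -> R -> R) : metric_graph_wf G -> (forall e t, is_point G e t -> h e t = 0) ->
  l2_inner G g h = 0.
Proof.
  intros [_ [Hw _]] Hz. unfold l2_inner. apply sumR_zero. intros e He. destruct (Hw e He) as [HL _].
  rewrite (RInt_ext _ (fun _ => 0)). { apply RInt_zeroR. }
  intros x Hx. rewrite Rmin_left, Rmax_right in Hx by lra. assert (is_point G e x) by (split; auto; lra). rewrite (Hz e x) by auto. apply Rmult_0_r.
Qed.

Lemma l2_pos G (g : nat -> R -> R) e t : metric_graph_wf G ->
  (forall e, (e < nE G)%nat -> forall x, continuity_pt (fun x => g e (clamp (len G e) x)) x) ->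
  is_point G e t -> g e t <> 0 -> 0 < l2_inner G g g.
Proof.
  intros [_ [Hw _]] Cg [He Ht] Hg. unfold l2_inner.
  apply (sumR_pos _ _ e He).
  - intros e' He'. destruct (Hw e' He') as [HL _]. apply RInt_ge_0; [lra| |intros; nra].
    apply (exRInt_cont _ (fun x => g e' (clamp (len G e') x) * g e' (clamp (len G e') x))); auto.
    + intros x Hx. rewrite clamp_id; auto.
    + intros x. apply (continuity_pt_mult (fun x => g e' (clamp (len G e') x)) (fun x => g e' (clamp (len G e') x))); auto.
  - destruct (Hw e He) as [HL _]. apply (RInt_sq_pos (g e) (len G e) t); auto.
Qed.
Theorem lemma4 (G : metric_graph) (W : nat -> R -> R)
    (lam : nat -> R) (f : nat -> nat -> R -> R)
    (M : nat) (ks : nat -> nat) (a : nat -> R) :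
  metric_graph_wf G ->
  potential_C1 G W ->
  eigen_enumeration G W lam f ->
  W_generic G W ->
  (0 < M)%nat ->
  (forall i j, (i < j)%nat -> (j < M)%nat -> (ks i < ks j)%nat) ->
  (forall i, (i < M)%nat -> a i <> 0) ->
  forall y : R, forall U : nat -> R -> Prop,
    graph_open G U ->
    (exists e t, is_point G e t /\ U e t) ->
    exists e t, is_point G e t /\ U e t /\
      sumR M (fun i => a i * exp (- lam (ks i) * y) * f (ks i) e t) <> 0.
Proof.
  intros Hwf HW Henum Hgen HM Hks Ha y U HU [e [t [Hpt HUt]]].
  destruct (classic (exists e t, is_point G e t /\ U e t /\
      sumR M (fun i => a i * exp (- lam (ks i) * y) * f (ks i) e t) <> 0)) as [Hyes|Hno]; [exact Hyes|exfalso].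
  assert (Hz : forall e t, is_point G e t -> U e t ->
      sumR M (fun i => a i * exp (- lam (ks i) * y) * f (ks i) e t) = 0).
  { intros e' t' H1 H2. apply NNPP. intro Hne. apply Hno. exists e', t'. auto. }
  destruct Henum as [Heig [_ [Horth _]]].
  destruct (choice_eig G W lam f Heig) as [D1 [D2 HD]].
  set (c := fun i => a i * exp (- lam (ks i) * y)).
  set (mu := fun i => lam (ks i)).
  set (nu := mu 0%nat).
  set (w := fun i => if Req_EM_T (mu i) nu then c i else 0).
  set (hnu := fun e t => sumR M (fun i => w i * f (ks i) e t)).
  pose proof Hwf as [HnE [Hw Hconn]].
  destruct Hpt as [He Ht]. destruct (Hw e He) as [HL _].
  destruct HU as [_ Hnb]. destruct (Hnb e t (conj He Ht) HUt) as [eps [Heps [Hin _]]].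
  assert (Hphi : forall n u, 0 <= u <= len G e -> Rabs (u - t) < eps ->
     sumR M (fun i => (c i * mu i ^ n) * f (ks i) e u) = 0).
  { induction n; intros u Hu Hut.
    - rewrite <- (Hz e u (conj He Hu) (Hin u Hu Hut)). apply sumR_ext. intros; unfold c; simpl; ring.
    - set (wn := fun i => c i * mu i ^ n).
      assert (d1 : forall v, 0 <= v <= len G e -> deriv_within (len G e) (fun x => sumR M (fun i => wn i * f (ks i) e x)) v
         (sumR M (fun i => wn i * D1 (ks i) e v))).
      { intros v Hv. apply (dw_lin _ M wn (fun i => f (ks i) e) (fun i => D1 (ks i) e)). intros i Hi. apply (proj1 (HD (ks i)) e He v Hv). }
      assert (d2 : forall v, 0 <= v <= len G e -> deriv_within (len G e) (fun x => sumR M (fun i => wn i * D1 (ks i) e x)) v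
         (sumR M (fun i => wn i * D2 (ks i) e v))).
      { intros v Hv. apply (dw_lin _ M wn (fun i => D1 (ks i) e) (fun i => D2 (ks i) e)). intros i Hi. apply (proj1 (HD (ks i)) e He v Hv). }
      assert (z1 : forall v, 0 <= v <= len G e -> Rabs (v - t) < eps -> sumR M (fun i => wn i * D1 (ks i) e v) = 0).
      { intros v Hv Hvt. apply (zero_on_J (len G e) t eps (fun x => sumR M (fun i => wn i * f (ks i) e x)) (sumR M (fun i => wn i * D1 (ks i) e v)) v); auto. }
      assert (z2 : sumR M (fun i => wn i * D2 (ks i) e u) = 0).
      { apply (zero_on_J (len G e) t eps (fun x => sumR M (fun i => wn i * D1 (ks i) e x)) (sumR M (fun i => wn i * D2 (ks i) e u)) u); auto. }
      assert (E : sumR M (fun i => c i * mu i ^ S n * f (ks i) e u) =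
          W e u * sumR M (fun i => wn i * f (ks i) e u) - sumR M (fun i => wn i * D2 (ks i) e u)).
      { rewrite <- sumR_scal, <- sumR_minus. apply sumR_ext. intros i Hi.
        destruct (proj1 (HD (ks i)) e He u Hu) as [_ [_ Eq]].
        assert (D2 (ks i) e u = W e u * f (ks i) e u - lam (ks i) * f (ks i) e u) by lra.
        rewrite H. unfold wn, mu. simpl. ring. }
      rewrite E, z2. rewrite (IHn u Hu Hut : sumR M (fun i => wn i * f (ks i) e u) = 0). ring. }
  assert (HJ : forall u, 0 <= u <= len G e -> Rabs (u - t) < eps -> hnu e u = 0).
  { intros u Hu Hut. pose proof (vander M mu (fun i => c i * f (ks i) e u)) as V.
    assert (V0 : forall n, sumR M (fun i => c i * f (ks i) e u * mu i ^ n) = 0).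
    { intros n. rewrite <- (Hphi n u Hu Hut). apply sumR_ext. intros; ring. }
    pose proof (V V0 nu) as V'.
    unfold hnu, w. etransitivity; [|exact V']. apply sumR_ext. intros. destruct Req_EM_T; ring. }
  assert (Hwnu : forall i, (i < M)%nat -> w i <> 0 -> lam (ks i) = nu).
  { intros i Hi. unfold w. destruct Req_EM_T; [auto| intros X; exfalso; apply X; reflexivity]. }
  pose proof (eigen_lin G W M w ks lam f D1 D2 nu HD Hwnu) as EL.
  assert (Hedge : forall u, 0 <= u <= len G e -> hnu e u = 0).
  { destruct HW as [HW1 _]. destruct (HW1 e He) as [dW HdW].
    destruct EL as [EL _].
    apply (ode_unique (len G e) (hnu e) (fun x => sumR M (fun i => w i * D1 (ks i) e x))
       (fun x => sumR M (fun i => w i * D2 (ks i) e x)) (fun x => W e x - nu) t); auto.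
    - intros u Hu. destruct (EL e He u Hu) as [A [B C]]. split; [exact A| split; [exact B|]].
      unfold hnu. nra.
    - intros u Hu eps0 H0. destruct (dw_cont _ _ _ _ (proj1 (HdW u Hu)) eps0 H0) as [d [Hd Hdd]].
      exists d. split; auto. intros v Hv Hvu. replace (W e v - nu - (W e u - nu)) with (W e v - W e u) by ring. auto.
    - apply HJ; auto. rewrite Rminus_diag, Rabs_R0; auto.
    - destruct (EL e He t Ht) as [A _].
      apply (zero_on_J (len G e) t eps (hnu e) (sumR M (fun i => w i * D1 (ks i) e t)) t); auto. rewrite Rminus_diag, Rabs_R0; auto. }
  assert (Hgc : forall b, (2 <= deg G (end_vertex G e b))%nat -> forall e' t', is_point G e' t' -> hnu e' t' = 0).
  { intros b Hdeg e' t' Hp'. apply NNPP; intro Hne.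
    apply (Hgen nu hnu (conj (ex_intro _ _ (ex_intro _ _ EL)) (ex_intro _ e' (ex_intro _ t' (conj Hp' Hne)))) e b He Hdeg).
    apply Hedge. destruct b; simpl; lra. }
  assert (Hall : forall e' t', is_point G e' t' -> hnu e' t' = 0).
  { destruct (Compare_dec.le_lt_dec 2 (deg G (src G e))) as [Hs|Hs].
    - apply (Hgc false); auto.
    - destruct (Compare_dec.le_lt_dec 2 (deg G (tgt G e))) as [Ht2|Ht2].
      + apply (Hgc true); auto.
      + intros e' t' [He' Ht']. rewrite (only_edge G e Hwf He Hs Ht2 e' He') in *. apply Hedge; auto. }
  assert (Z : l2_inner G (f (ks 0%nat)) hnu = 0) by (apply l2_zero; auto).
  unfold hnu in Z.
  rewrite (l2_lin G (f (ks 0%nat)) (fun i => f (ks i)) M w) in Z.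
  2: exact Hwf.
  2: { intros e0 He0 x. apply (fcont G W (lam (ks 0%nat)) _ (D1 (ks 0%nat)) (D2 (ks 0%nat))); auto. }
  2: { intros i Hi e0 He0 x. apply (fcont G W (lam (ks i)) _ (D1 (ks i)) (D2 (ks i))); auto. }
  rewrite (sumR_single M _ 0%nat) in Z.
  2: lia.
  2: { intros i Hi Hne. rewrite Horth; [ring|]. pose proof (Hks 0%nat i ltac:(lia) Hi). lia. }
  assert (Hw0 : w 0%nat = c 0%nat).
  { unfold w. destruct Req_EM_T as [|X]; [reflexivity| exfalso; apply X; reflexivity]. }
  assert (Hc0 : c 0%nat <> 0).
  { unfold c. pose proof (exp_pos (- lam (ks 0%nat) * y)). pose proof (Ha 0%nat HM).
    intro X. apply Rmult_integral in X. destruct X; [auto|lra]. }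
  destruct (Heig (ks 0%nat)) as [_ [e0 [t0 [Hp0 Hn0]]]].
  assert (P : 0 < l2_inner G (f (ks 0%nat)) (f (ks 0%nat))).
  { apply (l2_pos G _ e0 t0); auto. intros e1 He1 x. apply (fcont G W (lam (ks 0%nat)) _ (D1 (ks 0%nat)) (D2 (ks 0%nat))); auto. }
  rewrite Hw0 in Z. apply Rmult_integral in Z. destruct Z; [auto| lra].
Qed.
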